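(* Let $E$ be a Banach space and let $G:E\times\mathbb{R}\to E\times\mathbb{R}$, $G(e,t)=(e,g(e,t))$, be a continuous proper map. Suppose that no point of $E\times\mathbb{R}$ has three preimages under $G$. If some point has two preimages, then $G$ is a global fold, that is, there are homeomorphisms $\sigma_1,\sigma_2:E\times\mathbb{R}\to E\times\mathbb{R}$ of the form $\sigma_1(e,t)=(e,g_1(e,t))$, $\sigma_2(e,t)=(e,g_2(e,t))$ such that $(\sigma_2\circ G\circ\sigma_1)(e,t)=(e,-|t|)$ for all $(e,t)$. Otherwise, $G$ is a homeomorphism.
   Context: A continuous map is proper if preimages of compact sets are compact. *)

(* Defs.v *)
From HB Require Import structures.
From mathcomp Require Import all_boot all_order all_algebra.
From mathcomp Require Import all_classical all_reals all_analysis.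
Set Implicit Arguments. Unset Strict Implicit. Unset Printing Implicit Defensive.
Import Order.TTheory GRing.Theory Num.Theory.
Import numFieldNormedType.Exports.
Local Open Scope classical_set_scope.
Local Open Scope ring_scope.

Definition proper_map (T U : topologicalType) (f : T -> U) : Prop :=
  continuous f /\ forall K : set U, compact K -> compact (f @^-1` K).

Definition homeomorphism (T U : topologicalType) (f : T -> U) : Prop :=
  exists g : U -> T, [/\ continuous f, continuous g, cancel f g & cancel g f].

Definition has_two_preimages (T U : Type) (f : T -> U) (y : U) : Prop :=
  exists x1 x2, [/\ x1 <> x2, f x1 = y & f x2 = y].

Definition has_three_preimages (T U : Type) (f : T -> U) (y : U) : Prop :=
  exists x1 x2 x3, [/\ x1 <> x2, x1 <> x3, x2 <> x3 & [/\ f x1 = y, f x2 = y & f x3 = y]].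

(* Main.v *)
Require Import Defs.
From HB Require Import structures.
From mathcomp Require Import all_boot all_order all_algebra.
From mathcomp Require Import all_classical all_reals all_analysis.
From mathcomp Require Import lra.
Set Implicit Arguments. Unset Strict Implicit. Unset Printing Implicit Defensive.
Import Order.TTheory GRing.Theory Num.Theory.
Import numFieldNormedType.Exports.
Local Open Scope classical_set_scope.
Local Open Scope ring_scope.

Section RealLine.
Variable R : realType.
Implicit Types f : R -> R.

Definition no3 f := forall a b c, a < b -> b < c -> f a = f b -> f b = f c -> False.
Definition lo_p f := forall v, exists B, forall t, B < t -> f t < v.
Definition lo_m f := forall v, exists B, forall t, t < B -> f t < v.

Lemma ivt f a b v : continuous f -> a <= b ->
  (f a <= v <= f b) \/ (f b <= v <= f a) -> exists2 c, a <= c <= b & f c = v.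
Proof.
move=> fc ab hv.
have [|c cab fcv] := @IVT R f a b v ab (continuous_subspaceT fc).
  case: hv => /andP[h1 h2]; apply/andP; split.
  - by rewrite ge_min h1.
  - by rewrite le_max h2 orbT.
  - by rewrite ge_min h1 orbT.
  - by rewrite le_max h2.
by exists c => //; rewrite in_itv /= in cab.
Qed.

Lemma valley f : continuous f -> no3 f -> lo_p f -> lo_m f ->
  forall a c b, a < c -> c < b -> f c <= f a -> f c <= f b -> False.
Proof.
move=> fc n3 lp lm a c b ac cb fca fcb.
have [B1 hB1] := lm (f c); have [B2 hB2] := lp (f c).
pose w := Num.min (B1 - 1) (a - 1); pose w' := Num.max (B2 + 1) (b + 1).
have fw : f w < f c by apply: hB1; rewrite /w gt_min; apply/orP; left; lra.
have fw' : f w' < f c by apply: hB2; rewrite /w' lt_max; apply/orP; left; lra.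
have wa : w <= a by rewrite /w ge_min; apply/orP; right; lra.
have bw : b <= w' by rewrite /w' le_max; apply/orP; right; lra.
have [x1 /andP[_ x1a] fx1] := ivt (v := f c) fc wa (or_introl (introT andP (conj (ltW fw) fca))).
have [x3 /andP[bx3 _] fx3] := ivt (v := f c) fc bw (or_intror (introT andP (conj (ltW fw') fcb))).
apply: (n3 x1 c x3); [lra|lra|by []|by []].
Qed.

Lemma peak f : continuous f -> no3 f -> lo_p f -> lo_m f -> exists m,
  [/\ forall t, f t <= f m, forall s t, s < t -> t <= m -> f s < f t
    & forall s t, m <= s -> s < t -> f t < f s].
Proof.
move=> fc n3 lp lm.
have V := valley fc n3 lp lm.
have [B1 hB1] := lm (f 0); have [B2 hB2] := lp (f 0).
pose a := Num.min B1 0; pose b := Num.max B2 0.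
have a0 : a <= 0 by rewrite /a ge_min lexx orbT.
have b0 : 0 <= b by rewrite /b le_max lexx orbT.
have ab : a <= b := le_trans a0 b0.
have [m mab hm] := EVT_max ab (continuous_subspaceT fc).
have f0m : f 0 <= f m by apply: hm; rewrite in_itv /= a0 b0.
have gm : forall t, f t <= f m.
  move=> t; have [ta|tal] := ltP t a.
    apply/ltW/(lt_le_trans _ f0m)/hB1; move: ta; rewrite /a lt_min => /andP[] //.
  have [bt|tb] := ltP b t.
    apply/ltW/(lt_le_trans _ f0m)/hB2; move: bt; rewrite /b gt_max => /andP[] //.
  by apply: hm; rewrite in_itv /= tal tb.
exists m; split => //.
- move=> s t st tm; rewrite ltNge; apply/negP => fts.
  have [tm'|tm'] := ltP t m.
    by apply: (V s t m) => //; apply: gm.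
  have etm : t = m by apply/eqP; rewrite eq_le tm tm'.
  subst t.
  have fsm : f s = f m by apply/eqP; rewrite eq_le gm fts.
  apply: (V s ((s + m) / 2) m); [lra|lra| |]; rewrite ?fsm; exact: gm.
- move=> s t ms st; rewrite ltNge; apply/negP => fst.
  have [ms'|ms'] := ltP m s.
    by apply: (V m s t) => //; apply: gm.
  have ems : s = m by apply/eqP; rewrite eq_le ms ms'.
  subst s.
  have ftm : f t = f m by apply/eqP; rewrite eq_le gm fst.
  apply: (V m ((m + t) / 2) t); [lra|lra| |]; rewrite ?ftm; exact: gm.
Qed.

Definition FPf f := forall c, exists B, forall t, B < `|t| -> c < `|f t|.

Lemma normb (x : R) : x <= `|x| /\ - x <= `|x|.
Proof. by split; [exact: ler_norm | rewrite -normrN; exact: ler_norm]. Qed.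

Lemma L1 f T : continuous f -> FPf f -> f T < 0 -> (forall t, T <= t -> f t != 0) -> lo_p f.
Proof.
move=> fc fp fT nz v.
have [B hB] := fp `|v|.
exists (Num.max B (Num.max T 0)) => t; rewrite !gt_max => /and3P[Bt Tt t0].
have ftn : f t < 0.
  rewrite ltNge; apply/negP => ft0.
  have [c /andP[c1 c2] fc0] := ivt (v := 0) fc (ltW Tt) (or_introl (introT andP (conj (ltW fT) ft0))).
  by move: (nz c c1); rewrite fc0 eqxx.
have := hB t; rewrite (gtr0_norm t0) (ltr0_norm ftn) => /(_ Bt) h.
have [h1 h2] := normb v; lra.
Qed.

Lemma FPfN f : FPf f -> FPf (fun t => - f t).
Proof. by move=> fp c; have [B hB] := fp c; exists B => t /hB; rewrite normrN. Qed.

Lemma FPf_refl f : FPf f -> FPf (fun t => f (- t)).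
Proof. by move=> fp c; have [B hB] := fp c; exists B => t; rewrite -normrN => /hB. Qed.

Lemma dichot f : continuous f -> FPf f -> lo_p f \/ lo_p (fun t => - f t).
Proof.
move=> fc fp.
have [B0 hB0] := fp 0.
pose T := Num.max B0 0 + 1.
have nz : forall t, T <= t -> f t != 0.
  move=> t Tt; have : B0 < `|t|.
    have [hm1 hm2] : B0 <= Num.max B0 0 /\ 0 <= Num.max B0 0.
      by rewrite !le_max !lexx orbT.
    move: Tt; rewrite /T => Tt.
    have t0 : 0 <= t by lra.
    rewrite ger0_norm //; lra.
  by move/hB0; rewrite normr_gt0.
have [fT|fT|fT] := ltgtP (f T) 0.
- by left; apply: (L1 fc fp fT nz).
- right; apply: (@L1 _ T) => //.
  + by move=> x; apply: cvgN; exact: fc.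
  + exact: FPfN.
  + by rewrite oppr_lt0.
  + by move=> t /nz; rewrite oppr_eq0.
- by move: (nz T (lexx T)); rewrite fT eqxx.
Qed.

Lemma lo_m_refl f : lo_p (fun t => f (- t)) -> lo_m f.
Proof.
move=> h v; have [B hB] := h v; exists (- B) => t tB.
by rewrite -(opprK t); apply: hB; lra.
Qed.

Lemma left_pt f v : continuous f -> lo_m f -> forall a, v <= f a -> exists2 x, x <= a & f x = v.
Proof.
move=> fc lm a va; have [B hB] := lm v.
pose w := Num.min (B - 1) a.
have wa : w <= a by rewrite /w ge_min lexx orbT.
have fw : f w < v by apply: hB; rewrite /w gt_min; apply/orP; left; lra.
have [x /andP[_ xa] fx] := ivt fc wa (or_introl (introT andP (conj (ltW fw) va))).
by exists x.
Qed.

Lemma right_pt f v : continuous f -> lo_p f -> forall a, v <= f a -> exists2 x, a <= x & f x = v.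
Proof.
move=> fc lp a va; have [B hB] := lp v.
pose w := Num.max (B + 1) a.
have wa : a <= w by rewrite /w le_max lexx orbT.
have fw : f w < v by apply: hB; rewrite /w lt_max; apply/orP; left; lra.
have [x /andP[ax _] fx] := ivt fc wa (or_intror (introT andP (conj (ltW fw) va))).
by exists x.
Qed.

Lemma lo_lo_not_inj f : continuous f -> lo_p f -> lo_m f -> injective f -> False.
Proof.
move=> fc lp lm fi.
have [B1 hB1] := lm (f 0); have [B2 hB2] := lp (f 0).
pose w := Num.min (B1 - 1) (-1); pose w' := Num.max (B2 + 1) 1.
have fw : f w < f 0 by apply: hB1; rewrite /w gt_min; apply/orP; left; lra.
have fw' : f w' < f 0 by apply: hB2; rewrite /w' lt_max; apply/orP; left; lra.
have w0 : w <= 0 by rewrite /w ge_min; apply/orP; right; lra.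
have w'0 : 0 <= w' by rewrite /w' le_max; apply/orP; right; lra.
pose v := Num.max (f w) (f w').
have v0 : v < f 0 by rewrite /v gt_max fw fw'.
have [h1 h2] : f w <= v /\ f w' <= v by rewrite /v !le_max !lexx orbT.
have [x1 /andP[_ x10] fx1] := ivt fc w0 (or_introl (introT andP (conj h1 (ltW v0)))).
have [x2 /andP[x20 _] fx2] := ivt fc w'0 (or_intror (introT andP (conj h2 (ltW v0)))).
have e12 : x1 = x2 by apply: fi; rewrite fx1 fx2.
have x0 : x1 = 0 by lra.
by move: v0; rewrite -fx1 x0 ltxx.
Qed.

Lemma mixed_inj f : continuous f -> no3 f -> lo_p f -> lo_m (fun t => - f t) -> injective f.
Proof.
move=> fc n3 lp lm.
have lmN : forall a v, f a <= v -> exists2 x, x <= a & f x = v.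
  move=> a v fav.
  have fcN : continuous (fun t => - f t) by move=> x; apply: cvgN; exact: fc.
  have [|x xa fx] := left_pt (v := - v) fcN lm (a:=a); first by lra.
  by exists x => //; rewrite -[v]opprK -fx opprK.
have key : forall a b, a < b -> f a = f b -> False.
  move=> a b ab fab.
  pose u := (a + b) / 2.
  have au : a < u by rewrite /u; lra.
  have ub : u < b by rewrite /u; lra.
  have [fu|fu|fu] := ltgtP (f u) (f a).
  - pose v := (f a + f u) / 2.
    have [x1 /andP[x1a x1b] fx1] := ivt (v := v) fc (ltW au) (or_intror (introT andP (conj (ltac:(rewrite /v; lra) : f u <= v) (ltac:(rewrite /v; lra) : v <= f a)))).
    have [x2 /andP[x2a x2b] fx2] := ivt (v := v) fc (ltW ub) (or_introl (introT andP (conj (ltac:(rewrite /v; lra) : f u <= v) (ltac:(rewrite /v; lra) : v <= f b)))).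
    have [x3 bx3 fx3] := right_pt (v := v) fc lp (a:=b) (ltac:(rewrite /v; lra)).
    have h1 : x1 != u by apply/eqP => e; move: fx1; rewrite e /v; lra.
    have h2 : x2 != u by apply/eqP => e; move: fx2; rewrite e /v; lra.
    have h3 : x2 != b by apply/eqP => e; move: fx2; rewrite e /v; lra.
    have l1 : x1 < u by rewrite lt_neqAle h1 x1b.
    have l2 : u < x2 by rewrite lt_neqAle eq_sym h2 x2a.
    have l3 : x2 < b by rewrite lt_neqAle h3 x2b.
    by apply: (n3 x1 x2 x3); [lra|lra|rewrite fx1 fx2|rewrite fx2 fx3].
  - pose v := (f a + f u) / 2.
    have [x2 /andP[x2a x2b] fx2] := ivt (v := v) fc (ltW au) (or_introl (introT andP (conj (ltac:(rewrite /v; lra) : f a <= v) (ltac:(rewrite /v; lra) : v <= f u)))).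
    have [x3 /andP[x3a x3b] fx3] := ivt (v := v) fc (ltW ub) (or_intror (introT andP (conj (ltac:(rewrite /v; lra) : f b <= v) (ltac:(rewrite /v; lra) : v <= f u)))).
    have [x1 x1a fx1] := lmN a v (ltac:(rewrite /v; lra)).
    have h1 : x2 != a by apply/eqP => e; move: fx2; rewrite e /v; lra.
    have h2 : x2 != u by apply/eqP => e; move: fx2; rewrite e /v; lra.
    have h3 : x3 != u by apply/eqP => e; move: fx3; rewrite e /v; lra.
    have l1 : a < x2 by rewrite lt_neqAle eq_sym h1 x2a.
    have l2 : x2 < u by rewrite lt_neqAle h2 x2b.
    have l3 : u < x3 by rewrite lt_neqAle eq_sym h3 x3a.
    by apply: (n3 x1 x2 x3); [lra|lra|rewrite fx1 fx2|rewrite fx2 fx3].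
  - by apply: (n3 a u b) => //; rewrite fu.
move=> a b fab; have [ab|ba|//] := ltgtP a b.
  by case: (key a b ab fab).
by case: (key b a ba (esym fab)).
Qed.

Lemma surj_fib f : continuous f -> FPf f -> injective f -> forall s, exists t, f t = s.
Proof.
move=> fc fp fi s.
have fcN : continuous (fun t => - f t) by move=> x; apply: cvgN; exact: fc.
have fiN : injective (fun t => - f t) by move=> x y /oppr_inj; apply: fi.
have fcr : continuous (fun t => f (- t)).
  by move=> x; apply: (@continuous_comp _ _ _ (fun t => - t) f); [apply: cvgN; exact: cvg_id| exact: fc].
have [lp|lpN] := dichot fc fp; have [lm|lmN] := dichot fcr (FPf_refl fp).
- by case: (lo_lo_not_inj fc lp (lo_m_refl lm) fi).
- have [B hB] := lp s; have ha : - s <= - f (B + 1) by have := hB (B + 1); lra.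
  have [x _ fx] := left_pt fcN (lo_m_refl lmN) ha.
  by exists x; lra.
- have lm' := lo_m_refl lm.
  have [B hB] := lm' s; have ha : - s <= - f (B - 1) by have := hB (B - 1); lra.
  have [x _ fx] := right_pt fcN lpN ha.
  by exists x; lra.
- have lm' : lo_m (fun t => - f t) by apply: lo_m_refl.
  by case: (lo_lo_not_inj fcN lpN lm' fiN).
Qed.
End RealLine.

Section Cont.
Context {R : realType}.

Lemma cont2 {T U V W : topologicalType} (f : U * V -> W) (a : T -> U) (b : T -> V) :
  continuous f -> continuous a -> continuous b -> continuous (fun x => f (a x, b x)).
Proof.
move=> fc ac bc x.
apply: (@continuous_comp _ _ _ (fun x => (a x, b x)) f).
  by apply: cvg_pair; [exact: ac|exact: bc].
exact: fc.
Qed.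

Lemma fst_cont {U V : topologicalType} : continuous (@fst U V).
Proof. by move=> x; exact: cvg_fst. Qed.
Lemma snd_cont {U V : topologicalType} : continuous (@snd U V).
Proof. by move=> x; exact: cvg_snd. Qed.

Lemma cst_cont {U V : topologicalType} (c : V) : continuous (fun _ : U => c).
Proof. by move=> x; apply: cvg_cst. Qed.

Lemma comp_cont {U V W : topologicalType} (f : U -> V) (g : V -> W) :
  continuous f -> continuous g -> continuous (fun x => g (f x)).
Proof. by move=> fc gc x; apply: continuous_comp; [exact: fc | exact: gc]. Qed.

Lemma id_cont {U : topologicalType} : continuous (@id U).
Proof. by move=> x; exact: cvg_id. Qed.

Lemma pair_cont {T U V : topologicalType} (a : T -> U) (b : T -> V) :
  continuous a -> continuous b -> continuous (fun x => (a x, b x)).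
Proof. move=> ac bc; exact: (cont2 id_cont ac bc). Qed.

Lemma prod_neg (p q v : R) : (p - v) * (q - v) < 0 -> (p <= v <= q) \/ (q <= v <= p).
Proof.
move=> h; have [pv|vp] := lerP p v.
  left; apply/andP; split => //; rewrite leNgt; apply/negP => qv; nra.
right; apply/andP; split; last exact: ltW.
rewrite leNgt; apply/negP => qv; nra.
Qed.

Lemma ivt' (f : R -> R) a b v : continuous f -> a <= b ->
  (f a <= v <= f b) \/ (f b <= v <= f a) -> exists2 c, a <= c <= b & f c = v.
Proof.
move=> fc ab hv.
have [|c cab fcv] := @IVT R f a b v ab (continuous_subspaceT fc).
  case: hv => /andP[h1 h2]; apply/andP; split.
  - by rewrite ge_min h1.
  - by rewrite le_max h2 orbT.
  - by rewrite ge_min h1 orbT.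
  - by rewrite le_max h2.
by exists c => //; rewrite in_itv /= in cab.
Qed.

Lemma inv_cont {T : topologicalType} (f k : T * R -> R) :
  continuous f -> (forall e, injective (fun t => f (e, t))) ->
  (forall x, f (x.1, k x) = x.2) -> continuous k.
Proof.
move=> fc finj fk x0.
apply/cvgrPdist_le => eps e0.
set t0 := k x0.
have f0c : continuous (fun t => f (x0.1, t)) := cont2 fc (@cst_cont _ _ x0.1) id_cont.
have hm := itv_continuous_inj_mono (I := `]-oo, +oo[) (continuous_subspaceT f0c) (in2W (finj x0.1)).
have fx0 : f (x0.1, t0) = x0.2 := fk x0.
have iI : forall t : R, t \in `]-oo, +oo[ by move=> t; rewrite in_itv.
have neg : (f (x0.1, t0 - eps) - x0.2) * (f (x0.1, t0 + eps) - x0.2) < 0.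
  rewrite -fx0; case: hm => hm.
    have h1 := hm (t0 - eps) t0 (iI _) (iI _); have h2 := hm t0 (t0 + eps) (iI _) (iI _).
    have l1 : t0 - eps < t0 by lra.
    have l2 : t0 < t0 + eps by lra.
    move: (h1 l1) (h2 l2) => /= r1 r2; nra.
  have h1 := hm t0 (t0 - eps) (iI _) (iI _); have h2 := hm (t0 + eps) t0 (iI _) (iI _).
  have l1 : t0 - eps < t0 by lra.
  have l2 : t0 < t0 + eps by lra.
  move: (h1 l1) (h2 l2) => /= r1 r2; nra.
pose phi := fun x : T * R => (f (x.1, t0 - eps) - x.2) * (f (x.1, t0 + eps) - x.2).
have phic : continuous phi.
  move=> x; apply: cvgM; apply: cvgB.
  - exact: (cont2 fc fst_cont (@cst_cont _ _ _)).
  - exact: snd_cont.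
  - exact: (cont2 fc fst_cont (@cst_cont _ _ _)).
  - exact: snd_cont.
have hn := cvgr_lt _ (phic x0) _ neg.
near=> x.
have hx : phi x < 0 by near: x; exact: hn.
have fxc : continuous (fun t => f (x.1, t)) := cont2 fc (@cst_cont _ _ x.1) id_cont.
have ab : t0 - eps <= t0 + eps by lra.
have [c /andP[c1 c2] fcx] := ivt' fxc ab (prod_neg hx).
have ck : c = k x by apply: (finj x.1); rewrite /= fcx fk.
rewrite -ck ler_norml; apply/andP; split; lra.
Unshelve. all: by end_near. Qed.

End Cont.

Section ESec.
Context {R : realType} {E : normedModType R}.
Implicit Types g : E * R -> R.

Definition HUP g := forall S : set E, compact S -> forall c : R,
  exists B, forall e t, S e -> `|g (e, t)| <= c -> `|t| <= B.

Lemma HUP_proper g : proper_map (fun x : E * R => (x.1, g x)) -> HUP g.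
Proof.
move=> [Gc Gk] S cS c.
have cK : compact (S `*` `[- c, c]) by apply: compact_setX => //; exact: segment_compact.
have cP := Gk _ cK.
have cQ : compact (snd @` ((fun x : E * R => (x.1, g x)) @^-1` (S `*` `[- c, c]))).
  by apply: continuous_compact => //; apply: continuous_subspaceT; exact: snd_cont.
have := compact_bounded cQ; case => M [_ hM].
have hM1 := hM (M + 1) (ltac:(lra)).
exists (M + 1) => e t Se gc; apply: hM1.
exists (e, t) => //=; split => //=.
by rewrite in_itv /=; rewrite ler_norml in gc.
Qed.

Lemma FP_fib g : HUP g -> forall e, FPf (fun t => g (e, t)).
Proof.
move=> hu e c; have [B hB] := hu [set e] (@compact_set1 _ e) c.
exists B => t Bt; rewrite ltNge; apply/negP => h.
by have := hB e t erefl h; rewrite leNgt Bt.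
Qed.

Lemma transfer g : continuous g -> HUP g -> forall e e',
  lo_p (fun t => g (e, t)) -> lo_p (fun t => g (e', t)).
Proof.
move=> gc hu e e' lp.
pose p := fun l : R => e + l *: (e' - e).
have pc : continuous p.
  move=> l; apply: cvgD; first exact: cvg_cst.
  by apply: cvgZ; [exact: cvg_id | exact: cvg_cst].
have cS : compact (p @` `[0, 1]).
  by apply: continuous_compact; [exact: continuous_subspaceT | exact: segment_compact].
have [B hB] := hu _ cS 0.
have [B1 hB1] := lp 0.
have p0 : p 0 = e by rewrite /p scale0r addr0.
have p1 : p 1 = e' by rewrite /p scale1r addrC subrK.
have Se' : (p @` `[0, 1]) e' by exists 1; [rewrite /= in_itv /= ler01 lexx | exact: p1].
pose T := Num.max B B1 + 1.
have [hm1 hm2] : B <= Num.max B B1 /\ B1 <= Num.max B B1 by rewrite !le_max !lexx orbT.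
have gT : g (e, T) < 0 by apply: hB1; rewrite /T; lra.
have nz : forall t, T <= t -> g (e', t) != 0.
  move=> t Tt; apply/eqP => h.
  have := hB e' t Se'; rewrite h normr0 lexx => /(_ isT).
  have : B < t by rewrite /T in Tt; lra.
  move=> Bt; rewrite leNgt; apply/negP/negPn.
  by apply: (lt_le_trans Bt); exact: ler_norm.
have gT' : g (e', T) < 0.
  rewrite ltNge; apply/negP => h.
  have hc : continuous (fun l => g (p l, T)) := cont2 gc pc (@cst_cont _ _ T).
  have ha : g (p 0, T) <= 0 by rewrite p0; exact: (ltW gT).
  have hb : 0 <= g (p 1, T) by rewrite p1.
  have [l /andP[l0 l1] hl] := ivt (v := 0) hc ler01 (or_introl (introT andP (conj ha hb))).
  have : (p @` `[0, 1]) (p l) by exists l; rewrite /= ?in_itv /= ?l0 ?l1.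
  move=> /(hB _ T); rewrite hl normr0 lexx => /(_ isT).
  rewrite /T; have := ler_norm (Num.max B B1 + 1); lra.
apply: (L1 (cont2 gc (@cst_cont _ _ e') id_cont) (FP_fib hu e') gT' nz).
Qed.

End ESec.

Unset Implicit Arguments.
Set Strict Implicit.

Section Core.
Context {R : realType} {E : normedModType R}.
Variable g : E * R -> R.
Hypothesis gc : continuous g.
Hypothesis n3 : forall e, no3 (fun t => g (e, t)).
Hypothesis lp : forall e, lo_p (fun t => g (e, t)).
Hypothesis lm : forall e, lo_m (fun t => g (e, t)).

Let fc e : continuous (fun t => g (e, t)) := cont2 gc (@cst_cont _ _ e) id_cont.

Let hp (e : E) := peak (fc e) (n3 e) (lp e) (lm e).

Let m : E -> R := projT1 (choice hp).
Let mP (e : E) := projT2 (choice hp) e.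

Let mmax e t : g (e, t) <= g (e, m e).
Proof. by case: (mP e). Qed.
Let mL e s t : s < t -> t <= m e -> g (e, s) < g (e, t).
Proof. by case: (mP e) => _ h _; apply: h. Qed.
Let mR e s t : m e <= s -> s < t -> g (e, t) < g (e, s).
Proof. by case: (mP e) => _ _ h; apply: h. Qed.

Let mc : continuous m.
Proof.
move=> e0; apply/cvgrPdist_le => eps e0p.
set m0 := m e0.
have ha : g (e0, m0 - eps) < g (e0, m0) by apply: mL; rewrite /m0; lra.
have hb : g (e0, m0 + eps) < g (e0, m0) by apply: mR; rewrite /m0; lra.
pose c := (g (e0, m0) + Num.max (g (e0, m0 - eps)) (g (e0, m0 + eps))) / 2.
have [hm1 hm2] : g (e0, m0 - eps) <= Num.max (g (e0, m0 - eps)) (g (e0, m0 + eps)) /\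
   g (e0, m0 + eps) <= Num.max (g (e0, m0 - eps)) (g (e0, m0 + eps)) by rewrite !le_max !lexx orbT.
have hmx : Num.max (g (e0, m0 - eps)) (g (e0, m0 + eps)) < g (e0, m0) by rewrite gt_max ha hb.
have cc : forall a, continuous (fun e => g (e, a)) := fun a => cont2 gc id_cont (@cst_cont _ _ a).
have n1 := cvgr_gt _ (cc m0 e0) c (ltac:(rewrite /c; lra)).
have n2 := cvgr_lt _ (cc (m0 - eps) e0) c (ltac:(rewrite /c; lra)).
have n3' := cvgr_lt _ (cc (m0 + eps) e0) c (ltac:(rewrite /c; lra)).
near=> e.
have h1 : c < g (e, m0) by near: e; exact: n1.
have h2 : g (e, m0 - eps) < c by near: e; exact: n2.
have h3 : g (e, m0 + eps) < c by near: e; exact: n3'.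
have l1 : m e <= m0 + eps.
  rewrite leNgt; apply/negP => h.
  have := mL e m0 (m0 + eps) (ltac:(lra)) (ltW h); lra.
have l2 : m0 - eps <= m e.
  rewrite leNgt; apply/negP => h.
  have := mR e (m0 - eps) m0 (ltW h) (ltac:(lra)); lra.
rewrite ler_norml; apply/andP; split; lra.
Unshelve. all: by end_near. Qed.



Let h (x : E * R) := g (x.1, Num.min x.2 (m x.1)) - g (x.1, Num.max x.2 (m x.1)).

Let M (e : E) := g (e, m e).
Let Mc : continuous M := cont2 gc id_cont mc.

Let mfc : continuous (fun y : E * R => m y.1).
Proof. by apply: comp_cont; [exact: fst_cont | exact: mc]. Qed.
Let Mfc : continuous (fun y : E * R => M y.1).
Proof. by apply: comp_cont; [exact: fst_cont | exact: Mc]. Qed.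

Let hc : continuous h.
Proof.
move=> x; apply: cvgB.
- apply: (cont2 gc fst_cont); move=> y; apply: continuous_min; [exact: snd_cont | exact: mfc].
- apply: (cont2 gc fst_cont); move=> y; apply: continuous_max; [exact: snd_cont | exact: mfc].
Qed.

Let hL e u : u <= m e -> h (e, u) = g (e, u) - M e.
Proof. by move=> um; rewrite /h /= /M (min_l um) (max_r um). Qed.
Let hR e u : m e <= u -> h (e, u) = M e - g (e, u).
Proof. by move=> mu; rewrite /h /= /M (min_r mu) (max_l mu). Qed.

Let hinc e u v : u < v -> h (e, u) < h (e, v).
Proof.
move=> uv.
have [um|mu] := leP u (m e).
  have [vm|mv] := leP v (m e).
    by rewrite (hL _ _ um) (hL _ _ vm); have := mL e u v uv vm; lra.
  rewrite (hL _ _ um) (hR _ _ (ltW mv)).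
  have := mmax e u; have := mR e (m e) v (lexx _) mv; rewrite /M; lra.
rewrite (hR _ _ (ltW mu)) (hR _ _ (ltW (lt_trans mu uv))).
have := mR e u v (ltW mu) uv; lra.
Qed.

Let hinj e : injective (fun u => h (e, u)).
Proof.
move=> u v /= huv; have [uv|vu|//] := ltgtP u v.
- by have := hinc e _ _ uv; rewrite huv ltxx.
- by have := hinc e _ _ vu; rewrite huv ltxx.
Qed.

Let hsurj (x : E * R) : exists u, h (x.1, u) = x.2.
Proof.
have [t0|t0] := leP x.2 0.
  have [|u um gu] := left_pt (v := M x.1 + x.2) (fc x.1) (lm x.1) (a := m x.1).
    by rewrite /M; lra.
  by exists u; rewrite (hL _ _ um) gu; lra.
have [|u um gu] := right_pt (v := M x.1 - x.2) (fc x.1) (lp x.1) (a := m x.1).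
  by rewrite /M; lra.
by exists u; rewrite (hR _ _ um) gu; lra.
Qed.

Let k : E * R -> R := projT1 (choice hsurj).
Let kP (x : E * R) : h (x.1, k x) = x.2 := projT2 (choice hsurj) x.

Let kc : continuous k := inv_cont hc hinj kP.

Lemma core_fold : exists g1 g2 : E * R -> R,
  [/\ homeomorphism (fun x : E * R => (x.1, g1 x)),
      homeomorphism (fun x : E * R => (x.1, g2 x)) &
      forall x : E * R, (fun y : E * R => (y.1, g2 y))
        ((fun y : E * R => (y.1, g y)) ((fun y : E * R => (y.1, g1 y)) x)) = (x.1, - `|x.2|)].
Proof.
exists k, (fun x => x.2 - M x.1); split.
- exists (fun x => (x.1, h x)); split.
  + by apply: pair_cont; [exact: fst_cont | exact: kc].
  + by apply: pair_cont; [exact: fst_cont | exact: hc].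
  + by case=> e t /=; rewrite (kP (e, t)).
  + case=> e t /=; congr (_, _); apply: (hinj e) => /=.
    by rewrite (kP (e, h (e, t))).
- exists (fun x => (x.1, x.2 + M x.1)); split.
  + apply: pair_cont; [exact: fst_cont | move=> x; apply: cvgB; [exact: snd_cont | exact: Mfc]].
  + apply: pair_cont; [exact: fst_cont | move=> x; apply: cvgD; [exact: snd_cont | exact: Mfc]].
  + by case=> e t /=; rewrite subrK.
  + by case=> e t /=; rewrite addrK.
- case=> e t /=; congr (_, _).
  have := kP (e, t) => /= hk.
  have [um|mu] := leP (k (e, t)) (m e).
    rewrite (hL _ _ um) in hk.
    have := mmax e (k (e, t)); rewrite -/(M e) => le1.
    have t0 : t <= 0 by lra.
    by rewrite (ler0_norm t0); lra.
  rewrite (hR _ _ (ltW mu)) in hk.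
  have := mmax e (k (e, t)); rewrite -/(M e) => le1.
  have t0 : 0 <= t by lra.
  by rewrite (ger0_norm t0); lra.
Qed.

End Core.

Section Final.
Context {R : realType} {E : normedModType R}.
Implicit Types g : E * R -> R.

Lemma HUP_N g : HUP g -> HUP (fun x => - g x).
Proof. move=> hu S cS c; have [B hB] := hu S cS c; exists B => e t Se; rewrite normrN; exact: hB. Qed.

Lemma HUP_r g : HUP g -> HUP (fun x => g (x.1, - x.2)).
Proof. move=> hu S cS c; have [B hB] := hu S cS c; exists B => e t Se /= h; rewrite -normrN; exact: (hB e (- t) Se h). Qed.

Lemma neg_cont : continuous (fun x : E * R => (x.1, - x.2)).
Proof. apply: pair_cont; [exact: fst_cont | move=> x; apply: cvgN; exact: snd_cont]. Qed.

Lemma cont_r g : continuous g -> continuous (fun x => g (x.1, - x.2)).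
Proof. move=> gc; exact: (comp_cont neg_cont gc). Qed.

Lemma fold_case g : continuous g -> HUP g -> (forall e, no3 (fun t => g (e, t))) ->
  forall e0, lo_p (fun t => g (e0, t)) -> lo_p (fun t => g (e0, - t)) ->
  exists g1 g2 : E * R -> R,
  [/\ homeomorphism (fun x : E * R => (x.1, g1 x)),
      homeomorphism (fun x : E * R => (x.1, g2 x)) &
      forall x : E * R, (fun y : E * R => (y.1, g2 y))
        ((fun y : E * R => (y.1, g y)) ((fun y : E * R => (y.1, g1 y)) x)) = (x.1, - `|x.2|)].
Proof.
move=> gc hu n3 e0 lp0 lpr0.
have lp : forall e, lo_p (fun t => g (e, t)) := fun e => transfer gc hu e lp0.
have lm : forall e, lo_m (fun t => g (e, t)).
  move=> e; apply: lo_m_refl.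
  have hh := transfer (e := e0) (cont_r _ gc) (HUP_r _ hu) e lpr0.
  move: hh; rewrite /lo_p /=. by [].
exact: (core_fold g gc n3 lp lm).
Qed.

Lemma homeo_negcomp (g2 : E * R -> R) : homeomorphism (fun x : E * R => (x.1, g2 x)) ->
  homeomorphism (fun x : E * R => (x.1, g2 (x.1, - x.2))).
Proof.
move=> [psi [c1 c2 k1 k2]].
exists (fun x => ((psi x).1, - (psi x).2)); split.
- exact: (@comp_cont _ _ _ (fun x : E * R => (x.1, - x.2)) (fun y => (y.1, g2 y)) neg_cont c1).
- exact: (@comp_cont _ _ _ psi (fun x : E * R => (x.1, - x.2)) c2 neg_cont).
- by case=> e t /=; have := k1 (e, - t); rewrite /= => ->; rewrite /= opprK.
- move=> x /=; rewrite opprK.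
  by have := k2 x; case: (psi x) => a b.
Qed.

End Final.

Theorem proposition3p2 (R : realType) (E : completeNormedModType R)
    (g : E * R -> R) :
  let G := fun x : E * R => (x.1, g x) in
  proper_map G ->
  (forall y : E * R, ~ has_three_preimages G y) ->
  ((exists y : E * R, has_two_preimages G y) ->
     exists (g1 g2 : E * R -> R),
       let sigma1 := fun x : E * R => (x.1, g1 x) in
       let sigma2 := fun x : E * R => (x.1, g2 x) in
       [/\ homeomorphism sigma1, homeomorphism sigma2 &
           forall x : E * R, sigma2 (G (sigma1 x)) = (x.1, - `|x.2|)])
  /\
  (~ (exists y : E * R, has_two_preimages G y) -> homeomorphism G).
Proof.
move=> G Gp n3h.
have [Gc Gk] := Gp.
have gc : continuous g.
  exact: (@comp_cont _ _ _ G snd Gc snd_cont).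
have hu : HUP g := HUP_proper Gp.
have n3 : forall e, no3 (fun t => g (e, t)).
  move=> e a b c ab bc fab fbc; apply: (n3h (e, g (e, b))).
  exists (e, a), (e, b), (e, c); split.
  - by case=> h; move: ab; rewrite h ltxx.
  - by case=> h; move: (lt_trans ab bc); rewrite h ltxx.
  - by case=> h; move: bc; rewrite h ltxx.
  - by split; rewrite /G /= ?fab ?fbc.
have fce : forall e, continuous (fun t => g (e, t)) := fun e => cont2 gc (@cst_cont _ _ e) id_cont.
have fcr : forall e, continuous (fun t => g (e, - t)).
  by move=> e; apply: (@comp_cont _ _ _ (fun t => - t) (fun t => g (e, t))) => //; move=> t; apply: cvgN; exact: cvg_id.
split.
- move=> [y [[a1 b1] [[a2 b2] [x12 h1 h2]]]].
  have e21 : a2 = a1 by move: h1 h2; rewrite /G => <- [].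
  have g21 : g (a2, b2) = g (a1, b1) by move: h1 h2; rewrite /G => <- [].
  subst a2.
  set e0 := a1.
  have ninj : forall f : R -> R, (forall t, f t = g (e0, t)) -> injective f -> False.
    move=> f hf fi; apply: x12.
    have := fi b1 b2; rewrite !hf /e0 g21 => /(_ erefl) ->.
    by [].
  have fp := FP_fib hu e0.
  case: (dichot (fce e0) fp) => [lp0|lpN0]; case: (dichot (fcr e0) (FPf_refl fp)) => [lr0|lrN0].
  + exact: (fold_case g gc hu n3 e0 lp0 lr0).
  + by case: (ninj _ (fun _ => erefl) (mixed_inj (fce e0) (n3 e0) lp0 (lo_m_refl lrN0))).
  + have fcN : continuous (fun t => - g (e0, t)) by move=> t; apply: cvgN; exact: fce.
    have n3N : no3 (fun t => - g (e0, t)).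
      by move=> a b c ab bc /oppr_inj fab /oppr_inj fbc; exact: (n3 e0 a b c ab bc fab fbc).
    have lmN : lo_m (fun t => - - g (e0, t)).
      by under eq_fun do rewrite opprK; exact: (lo_m_refl lr0).
    have fi := mixed_inj fcN n3N lpN0 lmN.
    by exfalso; apply: (ninj _ (fun _ => erefl)) => a b /= h; apply: fi; rewrite /= h.
  + have n3N : forall e, no3 (fun t => - g (e, t)).
      by move=> e a b c ab bc /oppr_inj fab /oppr_inj fbc; exact: (n3 e a b c ab bc fab fbc).
    have gcN : continuous (fun x => - g x) by move=> x; apply: cvgN; exact: gc.
    have [g1 [g2 [s1 s2 H]]] := fold_case _ gcN (HUP_N _ hu) n3N e0 lpN0 lrN0.
    exists g1, (fun x => g2 (x.1, - x.2)); split => //.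
    exact: homeo_negcomp.
- move=> nt.
  have inj : forall e, injective (fun t => g (e, t)).
    move=> e a b hab; apply/eqP/negP => nab; apply: nt.
    exists (e, g (e, a)), (e, a), (e, b); split.
    + by case=> h; move: nab; rewrite h eqxx.
    + by [].
    + by rewrite /G /= -hab.
  have surj : forall x : E * R, exists t, g (x.1, t) = x.2.
    by move=> x; apply: (surj_fib (fce x.1) (FP_fib hu x.1) (inj x.1)).
  have [k kP] := choice surj.
  have kc : continuous k := inv_cont gc inj kP.
  exists (fun x => (x.1, k x)); split => //.
  + by apply: pair_cont; [exact: fst_cont | exact: kc].
  + by case=> e t /=; congr (_, _); apply: (inj e); rewrite (kP (e, g (e, t))).
  + by case=> e t; rewrite /G /= (kP (e, t)).
Qed.
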